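(* Let $(h_t^\psi,h_t^{\widetilde\psi})$ be two solutions of the conditioned Langevin dynamics (described in the context) on $D$ with boundary data $\psi,\widetilde\psi$ respectively and the same conditioning $a,b$, driven by the same Brownian motions, and let $\overline h=h^\psi-h^{\widetilde\psi}$. There exists $C>0$ depending only on $\mathcal V$ such that for every $T>S$, $\sum_{x\in D}|\overline h_T(x)|^2+\int_S^T\sum_{b\in D^*}|\nabla\overline h_t(b)|^2dt\le C\Big(\sum_{x\in D}|\overline h_S(x)|^2+\int_S^T\sum_{b\in\partial D^*}|\overline\psi(x_b)||\nabla\overline h_t(b)|dt\Big)$.
   Context: $\mathcal{V}\in C^2(\mathbf{R})$ with $\mathcal{V}(x)=\mathcal{V}(-x)$, $0<a_{\mathcal V}\le\mathcal V''\le A_{\mathcal V}<\infty$, $\mathcal V''$ Lipschitz. $D\subseteq\mathbf Z^2$ is bounded, $\partial D$ the set of vertices outside $D$ adjacent to $D$, $D^*$ the edges with at least one endpoint in $D$, $\partial D^*$ the edges joining $D$ to $\partial D$, and for $b\in\partial D^*$, $x_b$ is its endpoint in $\partial D$; $\nabla f(b)=f(y)-f(x)$ for $b=(x,y)$; gradients of $\overline h$ on boundary edges use the extension by $\overline\psi=\psi-\widetilde\psi$ on $\partial D$. $a,b:D\to[-\infty,\infty]$ with $a\le b$. The conditioned Langevin dynamics with boundary data $\psi$ is the solution of $dh_t(x)=\sum_{b\ni x}\mathcal V'(\nabla(h_t\vee\psi)(b))dt+d[\ell_t^a-\ell_t^b](x)+\sqrt2dW_t(x)$, $x\in D$, $t\in\mathbf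 R$, where the edges $b\ni x$ are oriented with initial point $x$, $h\vee\psi$ is $h$ on $D$ and $\psi$ on $\partial D$, $W$ is a family of independent standard two-sided Brownian motions, and $\ell^a(x),\ell^b(x)$ are non-decreasing bounded-variation processes which increase only when $h_t(x)=a(x)$, resp. $h_t(x)=b(x)$ ($\ell^a\equiv0$ if $a(x)=-\infty$, $\ell^b\equiv0$ if $b(x)=\infty$), keeping $a\le h_t\le b$. *)

(* Defs.v *)
From HB Require Import structures.
From mathcomp Require Import all_boot all_order all_algebra.
From mathcomp Require Import all_classical all_reals all_analysis.
Set Implicit Arguments. Unset Strict Implicit. Unset Printing Implicit Defensive.
Import Order.TTheory GRing.Theory Num.Theory.
Import numFieldNormedType.Exports.
Local Open Scope classical_set_scope.
Local Open Scope ring_scope.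

Definition vtx := (int * int)%type.

Definition nbrs (z : vtx) : seq vtx :=
  [:: (z.1 + 1, z.2); (z.1 - 1, z.2); (z.1, z.2 + 1); (z.1, z.2 - 1)].

(* lexicographic strict order, used to pick one orientation per edge *)
Definition lexlt (x y : vtx) : bool :=
  (x.1 < y.1) || ((x.1 == y.1) && (x.2 < y.2)).

(* D^* : edges with at least one endpoint in D, each listed exactly once;
   an edge joining D to its complement is oriented from D outwards. *)
Definition Dstar (D : seq vtx) : seq (vtx * vtx) :=
  [seq (x, y) | x <- D, y <- [seq y <- nbrs x | (y \notin D) || lexlt x y]].

(* \partial D^* : edges joining D to \partial D, as (x, x_b) with x in D, x_b in \partial D *)
Definition dDstar (D : seq vtx) : seq (vtx * vtx) :=
  [seq (x, y) | x <- D, y <- [seq y <- nbrs x | y \notin D]].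

Definition grad {R : zmodType} (f : vtx -> R) (e : vtx * vtx) : R := f e.2 - f e.1.

Definition ext {R : Type} (D : seq vtx) (h psi : vtx -> R) (z : vtx) : R :=
  if z \in D then h z else psi z.

Definition der {R : realType} (f : R -> R) : R -> R := (f^`())%classic.

Definition admissible_V {R : realType} (V : R -> R) : Prop :=
  (forall x, derivable V x 1) /\
  (forall x, derivable (der V) x 1) /\
  continuous (der (der V)) /\
  (forall x, V x = V (- x)) /\
  (exists aV AV : R, 0 < aV /\ forall x, aV <= der (der V) x <= AV) /\
  (exists L : R, forall x y, `|der (der V) x - der (der V) y| <= L * `|x - y|).

Definition drift {R : realType} (V : R -> R) (D : seq vtx) (psi : vtx -> R)
  (ht : vtx -> R) (x : vtx) : R :=
  \sum_(y <- nbrs x) der V (ext D ht psi y - ext D ht psi x).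

(* Pathwise notion of a solution of the conditioned Langevin dynamics on D
   with boundary data psi, conditioning a <= h <= b, driving paths W,
   and local-time processes la (at a) and lb (at b). *)
Definition is_solution {R : realType} (V : R -> R) (D : seq vtx)
  (psi : vtx -> R) (a b : vtx -> \bar R) (W : vtx -> R -> R)
  (h : R -> vtx -> R) (la lb : vtx -> R -> R) : Prop :=
  (forall x, x \in D -> continuous (fun t => h t x)) /\
  (forall x t, x \in D -> (a x <= (h t x)%:E)%E /\ ((h t x)%:E <= b x)%E) /\
  (forall x, x \in D -> {homo la x : s t / s <= t}) /\
  (forall x, x \in D -> {homo lb x : s t / s <= t}) /\
  (forall x, x \in D -> a x = -oo%E -> forall t, la x t = 0) /\
  (forall x, x \in D -> b x = +oo%E -> forall t, lb x t = 0) /\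
  (forall x s t, x \in D -> s <= t ->
     (forall u, s <= u <= t -> (a x < (h u x)%:E)%E) -> la x s = la x t) /\
  (forall x s t, x \in D -> s <= t ->
     (forall u, s <= u <= t -> ((h u x)%:E < b x)%E) -> lb x s = lb x t) /\
  (forall x s t, x \in D -> s <= t ->
     h t x - h s x =
       Rintegral lebesgue_measure `[s, t] (fun u => drift V D psi (h u) x)
       + (la x t - la x s) - (lb x t - lb x s)
       + Num.sqrt 2 * (W x t - W x s)).

(* Main.v *)
Require Import Defs.
From HB Require Import structures.
From mathcomp Require Import all_boot all_order all_algebra.
From mathcomp Require Import all_classical all_reals all_analysis.
From mathcomp Require Import ring lra zify.
Import Order.TTheory GRing.Theory Num.Theory.
Import numFieldNormedType.Exports.
Local Open Scope classical_set_scope.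
Local Open Scope ring_scope.

Section S.
Context {R : realType}.
Notation mu := (@lebesgue_measure R).

Lemma cint (f : R -> R) (s t : R) : continuous f ->
  mu.-integrable `[s, t] (EFin \o f).
Proof.
move=> cf; apply: continuous_compact_integrable; first exact: segment_compact.
by apply: continuous_subspaceT.
Qed.

Lemma Radd (f : R -> R) (S s t : R) : continuous f -> S <= s -> s <= t ->
  Rintegral mu `[S, t] f = Rintegral mu `[S, s] f + Rintegral mu `[s, t] f.
Proof.
move=> cf Ss st.
have := @Rintegral_itvB R f (BLeft S) (BRight t) s (cint f S t cf).
rewrite !bnd_simp => /(_ Ss st) E.
rewrite -[X in _ + X]Rintegral_itv_obnd_cbnd; last first.
  apply: integrableS (cint f s t cf) => //; apply: subset_itvr; rewrite bnd_simp //.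
rewrite -E; by rewrite addrC subrK.
Qed.
End S.
Lemma real_ind {R : realType} (E : R -> R) (S T : R) : S <= T ->
  (forall t0, S <= t0 <= T -> exists2 d : R, 0 < d &
     forall s t, S <= s -> s <= t -> t <= T -> t0 - d < s -> t < t0 + d -> E t <= E s) ->
  E T <= E S.
Proof.
move=> ST loc.
pose A := [set t | S <= t <= T /\ E t <= E S].
have hs : has_sup A.
  split; first by exists S; rewrite /A /= lexx ST.
  by exists T => t [/andP[_ ->]].
set c := sup A.
have Sc : S <= c by apply: (sup_upper_bound hs); rewrite /A /= lexx ST.
have cT : c <= T by apply: ge_sup; [case: hs|move=> t [/andP[_ ->]]].
have [d d0 Hd] := loc c (introT andP (conj Sc cT)).
have [s As cs] := sup_adherent d0 hs.
have sc : s <= c by apply: (sup_upper_bound hs).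
case: As => /andP[Ss sT] Es.
have Ec : E c <= E S.
  apply: le_trans Es; apply: Hd => //.
  by rewrite ltrDl.
have [cT'|] := ltP c T; last first.
  by move=> Tc; have -> : T = c by apply/eqP; rewrite eq_le cT Tc.
pose t := Num.min (c + d / 2) T.
have ct : c < t by rewrite /t lt_min cT' ltrDl divr_gt0.
have : A t.
  split.
    have := le_trans Sc (ltW ct); rewrite /t ge_min lexx orbT andbT => ->.
    done.
  apply: le_trans Es; apply: Hd => //.
  - by apply: le_trans sc (ltW ct).
  - by rewrite /t ge_min lexx orbT.
  - rewrite /t gt_min; apply/orP; left; rewrite ltrD2l.
    by rewrite ltr_pdivrMr // ltr_pMr // ltr1n.
move=> /(sup_upper_bound hs); rewrite -/c => tc.
by move: (lt_le_trans ct tc); rewrite ltxx.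
Qed.
Lemma loc_cont {R : realType} (g : R -> R) (t0 e : R) : continuous g -> 0 < e ->
  exists2 d : R, 0 < d & forall u, `|t0 - u| < d -> `|g t0 - g u| < e.
Proof.
move=> cg e0.
have [d d0 Hd] := (iffLR (nbhs_ballP _ _) (@cvgr_dist_lt _ _ _ _ _ g _ (cg t0) _ e0)).
exists d => // u tu; exact: Hd.
Qed.

Lemma Rint_cst {R : realType} (s t c : R) : s <= t ->
  Rintegral (@lebesgue_measure R) `[s, t] (fun _ => c) = c * (t - s).
Proof.
move=> st; rewrite Rintegral_cst //= lebesgue_measure_itv /= lte_fin.
case: (ltP s t) => [//|ts]; have -> : s = t by apply/eqP; rewrite eq_le st ts.
by rewrite subrr mulr0.
Qed.

Lemma small_le {R : realType} (x K : R) : 0 <= K ->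
  (forall e, 0 < e -> x <= e * K) -> x <= 0.
Proof.
move=> K0 H; case: (leP x 0) => // x0.
have K1 : 0 < K + 1 by lra.
have := H (x / (K + 1)) (divr_gt0 x0 K1).
rewrite mulrAC ler_pdivlMr // => h.
have : x * (K + 1) <= x * K by [].
rewrite mulrDr mulr1; lra.
Qed.

Section En.
Context {R : realType}.
Notation mu := (@lebesgue_measure R).

Lemma energy (g F P N : R -> R) (S T : R) : continuous g -> continuous F ->
 {homo P : s t / s <= t} -> {homo N : s t / s <= t} ->
 (forall s t, s <= t -> g t - g s = Rintegral mu `[s,t] F + (P t - P s) - (N t - N s)) ->
 (forall s t, s <= t -> P s < P t -> exists2 u, s <= u <= t & g u <= 0) ->
 (forall s t, s <= t -> N s < N t -> exists2 u, s <= u <= t & 0 <= g u) ->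
 S <= T -> g T ^+ 2 - g S ^+ 2 <= Rintegral mu `[S,T] (fun u => 2 * g u * F u).
Proof.
move=> cg cF hP hN eq sP sN ST.
set G := fun u => 2 * g u * F u.
have cG : continuous G.
  by move=> x; apply: cvgM; [apply: cvgM; [exact: cvg_cst|exact: cg]|exact: cF].
have J0 : Rintegral mu `[S, S] G = 0.
  have := Radd G S S S cG (lexx S) (lexx S); lra.
rewrite -subr_le0.
apply: (@small_le _ _ ((T - S) + (P T - P S) + (N T - N S))).
  have := hP _ _ ST; have := hN _ _ ST; lra.
move=> e e0.
pose E t := g t ^+ 2 - Rintegral mu `[S,t] G - e * t - e * (P t + N t).
suff : E T <= E S by rewrite /E J0; lra.
apply: real_ind => // t0 /andP[St0 t0T].
pose K := `|F t0| + 1.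
have K1 : 1 <= K by rewrite /K lerDr.
have K0 : 0 < K by lra.
pose eta := e / (4 * K).
have eta0 : 0 < eta by rewrite divr_gt0 // mulr_gt0.
have eta4K : 4 * eta * K = e.
  rewrite /eta; field; rewrite gt_eqF // ; lra.

have eta4 : 4 * eta <= e.
  rewrite -eta4K ler_peMr //; last by lra.
have [d1 d10 Hd1] := @loc_cont R g t0 eta cg eta0.
have [d2 d20 Hd2] := @loc_cont R F t0 1 cF ltr01.
exists (Num.min d1 d2); first by rewrite lt_min d10 d20.
move=> s t Ss st tT hs ht.
have near u : s <= u <= t -> `|g t0 - g u| < eta /\ `|F u| <= K.
  move=> /andP[su ut].
  have hu : `|t0 - u| < Num.min d1 d2.
    rewrite ltr_norml; apply/andP; split; lra.
  move: hu; rewrite lt_min => /andP[h1 h2]; split; first exact: Hd1.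
  have := Hd2 _ h2; rewrite /K => h.
  have := lerB_dist (F u) (F t0); rewrite distrC; lra.
have [nt1 _] := near t (introT andP (conj st (lexx t))).
have [ns1 _] := near s (introT andP (conj (lexx s) st)).
have Jst := Radd G S s t cG Ss st.
set I := Rintegral mu `[s,t] G in Jst *.
have eqst := eq s t st.
set X := g t + g s.
have sq : g t ^+ 2 - g s ^+ 2 = X * (g t - g s) by rewrite /X; ring.
have cXF : continuous (fun u => X * F u).
  by move=> x; apply: cvgM; [exact: cvg_cst|exact: cF].
have cXFG : continuous (fun u => X * F u - G u).
  by move=> x; apply: cvgB; [exact: cXF|exact: cG].
have C1 : X * Rintegral mu `[s,t] F - I <= e * (t - s).
  rewrite -RintegralZl //; last exact: cint.
  rewrite /I -RintegralB //; [|exact: cint|exact: cint].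
  rewrite -(@Rint_cst R s t e st); apply: le_Rintegral => //; [exact: (cint _ s t cXFG)|apply: cint => x; exact: cvg_cst|].
  move=> u; rewrite /= in_itv /= => hu; have [nu1 nu2] := near u hu.
  have -> : X * F u - G u = ((g t - g u) + (g s - g u)) * F u by rewrite /X /G; ring.
  apply: le_trans (ler_norm _) _; rewrite normrM -eta4K.
  apply: ler_pM => //.
  have := ler_normD (g t - g u) (g s - g u).
  have -> : g t - g u = (g t0 - g u) - (g t0 - g t) by ring.
  have -> : g s - g u = (g t0 - g u) - (g t0 - g s) by ring.
  have := ler_normB (g t0 - g u) (g t0 - g t).
  have := ler_normB (g t0 - g u) (g t0 - g s).
  lra.
have C2 : X * (P t - P s) <= e * (P t - P s).
  case: (ltP (P s) (P t)) => hPs; last first.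
    have -> : P t = P s by apply/eqP; rewrite eq_le hPs hP.
    by rewrite subrr !mulr0.
  have [u hu gu0] := sP s t st hPs; have [nu1 _] := near u hu.
  apply: ler_wpM2r; first by rewrite subr_ge0 ltW.
  move: nu1 nt1 ns1 => /ltr_normlP[a1 a2] /ltr_normlP[b1 b2] /ltr_normlP[c1 c2].
  rewrite /X; lra.
have C3 : - X * (N t - N s) <= e * (N t - N s).
  case: (ltP (N s) (N t)) => hNs; last first.
    have -> : N t = N s by apply/eqP; rewrite eq_le hNs hN.
    by rewrite subrr !mulr0.
  have [u hu gu0] := sN s t st hNs; have [nu1 _] := near u hu.
  apply: ler_wpM2r; first by rewrite subr_ge0 ltW.
  move: nu1 nt1 ns1 => /ltr_normlP[a1 a2] /ltr_normlP[b1 b2] /ltr_normlP[c1 c2].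
  rewrite /X; lra.
have i1 : X * (g t - g s) = X * Rintegral mu `[s,t] F + X * (P t - P s) - (X * (N t - N s)).
  by rewrite eqst; ring.
have i2 : e * (P t + N t) - e * (P s + N s) = e * (P t - P s) + e * (N t - N s) by ring.
have i3 : e * t - e * s = e * (t - s) by ring.
have i4 : - X * (N t - N s) = - (X * (N t - N s)) by ring.
rewrite /E Jst; lra.
Qed.
End En.

Section Vfacts.
Context {R : realType} (V : R -> R).

Lemma der_cont : (forall x, derivable (der V) x 1) -> continuous (der V).
Proof.
move=> d x; apply/differentiable_continuous; rewrite -derivable1_diffP; exact: d.
Qed.

Lemma der_odd : (forall x, derivable V x 1) -> (forall x, V x = V (- x)) ->
  forall x, der V (- x) = - der V x.
Proof.
move=> dV ev x.
have EV : V = V \o (fun y => - y) by apply/funext => y /=; rewrite ev.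
have dn : derivable (fun y : R => - y) x 1.
  by apply: derivableN; exact: derivable_id.
have : der V x = der (V \o (fun y => - y)) x by rewrite -EV.
rewrite /der (derive1_comp dn (dV _)).
have -> : (fun y : R => - y)^`()%classic x = -1.
  rewrite derive1E; change ('D_1 (- (@id R)) x = -1).
  by rewrite deriveN ?derive_id //; exact: derivable_id.
rewrite mulrN1 derive1E => ->; by rewrite opprK.
Qed.

Lemma der_mvt (aV AV : R) : (forall x, derivable (der V) x 1) ->
  (forall x, aV <= der (der V) x <= AV) ->
  forall p q, exists2 c, aV <= c <= AV & der V p - der V q = c * (p - q).
Proof.
move=> d H p q.
wlog pq : p q / q <= p.
  move=> W; case: (leP q p) => [|/ltW qp]; first exact: W.
  have [c hc e] := W q p qp; exists c => //.
  by rewrite -[LHS]opprB e; ring.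
have [c _ e] := @MVT_segment R (der V) (der (der V)) q p pq
  (fun x _ => is_derive_eq (derivableP (d x)) (esym (derive1E (der V) x))) (continuous_subspaceT (der_cont d)).
exists (der (der V) c) => //.
Qed.
End Vfacts.

Lemma nbrs_uniq z : uniq (nbrs z).
Proof.
case: z => a b; rewrite /nbrs /= !inE !xpair_eqE /=.
apply/and4P; split=> //; apply/negP; lia.
Qed.

Lemma nbrs_sym x y : (y \in nbrs x) = (x \in nbrs y).
Proof.
case: x => a b; case: y => c d; rewrite /nbrs !inE !xpair_eqE /=.
apply/idP/idP; lia.
Qed.

Section Sums.
Context {R : realFieldType}.

Lemma sum_swap_filter (s1 s2 : seq vtx) (F : vtx -> R) : uniq s1 -> uniq s2 ->
  \sum_(y <- s1 | y \in s2) F y = \sum_(y <- s2 | y \in s1) F y.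
Proof.
move=> u1 u2; rewrite -big_filter -[RHS]big_filter; apply: perm_big.
apply: uniq_perm; try exact: filter_uniq.
by move=> y; rewrite !mem_filter andbC.
Qed.

Lemma swap_adj (D : seq vtx) (F : vtx -> vtx -> R) : uniq D ->
  \sum_(x <- D) \sum_(y <- nbrs x | y \in D) F x y =
  \sum_(x <- D) \sum_(y <- nbrs x | y \in D) F y x.
Proof.
move=> uD.
have E (G : vtx -> vtx -> R) : \sum_(x <- D) \sum_(y <- nbrs x | y \in D) G x y =
   \sum_(x <- D) \sum_(y <- D) (if y \in nbrs x then G x y else 0).
  apply: eq_bigr => x _; rewrite sum_swap_filter ?nbrs_uniq //.
  by rewrite big_mkcond.
rewrite !E exchange_big /=; apply: eq_bigr => x _; apply: eq_bigr => y _.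
by rewrite nbrs_sym.
Qed.

Lemma lattice (D : seq vtx) (g : vtx -> R) (Dl : vtx -> vtx -> R) :
  uniq D -> (forall x y, Dl y x = - Dl x y) ->
  \sum_(x <- D) g x * \sum_(y <- nbrs x) Dl x y =
  \sum_(x <- D) \sum_(y <- nbrs x)
     (if y \in D then - ((g y - g x) * Dl x y) / 2 else g x * Dl x y).
Proof.
move=> uD anti.
have T : \sum_(x <- D) \sum_(y <- nbrs x | y \in D) g y * Dl x y =
         - \sum_(x <- D) \sum_(y <- nbrs x | y \in D) g x * Dl x y.
  rewrite swap_adj // -sumrN; apply: eq_bigr => x _; rewrite -sumrN.
  by apply: eq_bigr => y _; rewrite anti mulrN.
have L : \sum_(x <- D) g x * \sum_(y <- nbrs x) Dl x y =
   \sum_(x <- D) \sum_(y <- nbrs x | y \in D) g x * Dl x y +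
   \sum_(x <- D) \sum_(y <- nbrs x | y \notin D) g x * Dl x y.
  rewrite -big_split /=; apply: eq_bigr => x _.
  by rewrite big_distrr /= (bigID (fun y => y \in D)).
have Rr : \sum_(x <- D) \sum_(y <- nbrs x)
     (if y \in D then - ((g y - g x) * Dl x y) / 2 else g x * Dl x y) =
   \sum_(x <- D) \sum_(y <- nbrs x | y \in D) (- ((g y - g x) * Dl x y) / 2) +
   \sum_(x <- D) \sum_(y <- nbrs x | y \notin D) g x * Dl x y.
  rewrite -big_split /=; apply: eq_bigr => x _.
  rewrite (bigID (fun y => y \in D)) /=; congr (_ + _).
    by apply: eq_bigr => y ->.
  by apply: eq_bigr => y /negbTE ->.
rewrite L Rr; congr (_ + _).
have -> : \sum_(x <- D) \sum_(y <- nbrs x | y \in D) (- ((g y - g x) * Dl x y) / 2) =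
  (- (\sum_(x <- D) \sum_(y <- nbrs x | y \in D) g y * Dl x y) +
   \sum_(x <- D) \sum_(y <- nbrs x | y \in D) g x * Dl x y) / 2.
  rewrite -sumrN -big_split big_distrl /=; apply: eq_bigr => x _.
  rewrite -sumrN -big_split big_distrl /=; apply: eq_bigr => y _.
  by ring.
rewrite T opprK; by field.
Qed.
End Sums.

Section M1.
Context {R : realType}.
Notation mu := (@lebesgue_measure R).

Lemma cont_sum (I : Type) (s : seq I) (Fs : I -> R -> R) :
  (forall i, continuous (Fs i)) -> continuous (fun u => \sum_(i <- s) Fs i u).
Proof.
move=> c u; elim: s => [|i s IH].
  have -> : (fun u => \sum_(i <- [::]) Fs i u) = fun=> 0.
    by apply/funext => v; rewrite big_nil.
  exact: cvg_cst.
have -> : (fun u => \sum_(j <- i :: s) Fs j u) =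
   (fun u => Fs i u + \sum_(j <- s) Fs j u).
  by apply/funext => v; rewrite big_cons.
apply: cvgD => //; exact: c.
Qed.

Lemma cont_ext (D : seq vtx) (h : R -> vtx -> R) (psi : vtx -> R) :
  (forall x, x \in D -> continuous (fun t => h t x)) ->
  forall z, continuous (fun t => ext D (h t) psi z).
Proof.
move=> hc z; rewrite /ext; case: (boolP (z \in D)) => zD; first exact: hc.
move=> u; exact: cvg_cst.
Qed.

Lemma cont_drift (V : R -> R) (D : seq vtx) (h : R -> vtx -> R) (psi : vtx -> R) x :
  continuous (der V) ->
  (forall x, x \in D -> continuous (fun t => h t x)) ->
  continuous (fun t => drift V D psi (h t) x).
Proof.
move=> cV hc; rewrite /drift; apply: cont_sum => y u.
apply: (@continuous_comp _ _ _ (fun t => ext D (h t) psi y - ext D (h t) psi x) (der V)).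
  by apply: cvgB; apply: cont_ext.
exact: cV.
Qed.

Lemma Rint_sum (I : Type) (s : seq I) (Fs : I -> R -> R) (S T : R) : S <= T ->
  (forall i, continuous (Fs i)) ->
  Rintegral mu `[S, T] (fun u => \sum_(i <- s) Fs i u) =
  \sum_(i <- s) Rintegral mu `[S, T] (Fs i).
Proof.
move=> ST c; elim: s => [|i s IH].
  under eq_Rintegral do rewrite big_nil.
  by rewrite big_nil Rint_cst // mul0r.
under eq_Rintegral do rewrite big_cons.
rewrite big_cons RintegralD //; first by rewrite IH.
- exact: cint.
- by apply: cint; apply: cont_sum.
Qed.

Lemma incr_wit (l : R -> R) (p : R -> bool) (s t : R) :
  ((forall u, s <= u <= t -> p u) -> l s = l t) -> l s < l t ->
  exists2 u, s <= u <= t & ~~ p u.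
Proof.
move=> H lt; case: (pselect (exists2 u, s <= u <= t & ~~ p u)) => // nex.
have : l s = l t.
  apply: H => u hu; apply/negPn/negP => npu; apply: nex; by exists u.
by move=> e; move: lt; rewrite e ltxx.
Qed.
End M1.

Section M2.
Context {R : realType}.

Lemma pointwise (V : R -> R) (aV AV : R) (a0 : 0 <= aV)
  (mvt : forall p q, exists2 c, aV <= c <= AV & der V p - der V q = c * (p - q))
  (oddV : forall x, der V (- x) = - der V x)
  (D : seq vtx) (uD : uniq D) (e1 e2 psibar : vtx -> R)
  (hpb : forall z, z \notin D -> e1 z - e2 z = psibar z) :
  \sum_(x <- D) 2 * (e1 x - e2 x) *
     (\sum_(y <- nbrs x) der V (e1 y - e1 x) - \sum_(y <- nbrs x) der V (e2 y - e2 x))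
  <= - aV * \sum_(e <- Dstar D) (grad (fun z => e1 z - e2 z) e) ^+ 2
     + 2 * AV * \sum_(e <- dDstar D) `|psibar e.2| * `|grad (fun z => e1 z - e2 z) e|.
Proof.
set gg := fun z => e1 z - e2 z.
pose Dl x y := der V (e1 y - e1 x) - der V (e2 y - e2 x).
have anti x y : Dl y x = - Dl x y.
  rewrite /Dl -(opprB (e1 y)) -(opprB (e2 y)) !oddV; ring.
have -> : \sum_(x <- D) 2 * (e1 x - e2 x) *
     (\sum_(y <- nbrs x) der V (e1 y - e1 x) - \sum_(y <- nbrs x) der V (e2 y - e2 x))
   = 2 * \sum_(x <- D) gg x * \sum_(y <- nbrs x) Dl x y.
  rewrite mulr_sumr; apply: eq_bigr => x _; rewrite -sumrB /gg; ring.
rewrite lattice //.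
pose bnd x y := - (aV / 2) * (gg y - gg x) ^+ 2 +
   AV * (if y \in D then 0 else `|psibar y| * `|gg y - gg x|).
have tb x y : (if y \in D then - ((gg y - gg x) * Dl x y) / 2 else gg x * Dl x y) <= bnd x y.
  have [c /andP[ac cA] ec] := mvt (e1 y - e1 x) (e2 y - e2 x).
  have ed : Dl x y = c * (gg y - gg x) by rewrite /Dl ec /gg; congr (_ * _); ring.
  rewrite /bnd ed; case: ifP => yD.
    rewrite mulr0 addr0.
    have := sqr_ge0 (gg y - gg x); set d := gg y - gg x => d2.
    have : aV * d ^+ 2 <= c * d ^+ 2 by apply: ler_wpM2r.
    have -> : - (d * (c * d)) / 2 = - (c * d ^+ 2) / 2 by ring.
    lra.
  have gy : gg y = psibar y by rewrite /gg hpb // yD.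
  set d := gg y - gg x.
  have -> : gg x * (c * d) = c * d * gg y - c * d ^+ 2 by rewrite /d; ring.
  have c0 : 0 <= c by apply: le_trans ac.
  have h1 : c * d * gg y <= AV * (`|psibar y| * `|d|).
    apply: le_trans (ler_norm _) _; rewrite -gy !normrM (ger0_norm c0).
    have -> : c * `|d| * `|gg y| = c * (`|gg y| * `|d|) by ring.
    by apply: ler_wpM2r => //; rewrite mulr_ge0.
  have : aV * d ^+ 2 <= c * d ^+ 2 by apply: ler_wpM2r => //; exact: sqr_ge0.
  have := mulr_ge0 a0 (sqr_ge0 d).
  lra.
have S1 : \sum_(x <- D) \sum_(y <- nbrs x)
     (if y \in D then - ((gg y - gg x) * Dl x y) / 2 else gg x * Dl x y)
   <= \sum_(x <- D) \sum_(y <- nbrs x) bnd x y.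
  by apply: ler_sum => x _; apply: ler_sum => y _; exact: tb.
have S2 : \sum_(x <- D) \sum_(y <- nbrs x) bnd x y =
   - (aV / 2) * \sum_(x <- D) \sum_(y <- nbrs x) (gg y - gg x) ^+ 2 +
   AV * \sum_(e <- dDstar D) `|psibar e.2| * `|grad gg e|.
  rewrite /dDstar big_allpairs_dep !mulr_sumr -big_split.
  apply: eq_bigr => x _; rewrite big_filter big_mkcond /= !mulr_sumr -big_split.
  apply: eq_bigr => y _; rewrite /bnd /grad /=; case: ifP => //= _.
have S3 : \sum_(e <- Dstar D) (grad gg e) ^+ 2 <=
   \sum_(x <- D) \sum_(y <- nbrs x) (gg y - gg x) ^+ 2.
  rewrite /Dstar big_allpairs_dep; apply: ler_sum => x _.
  rewrite big_filter big_mkcond; apply: ler_sum => y _.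
  by case: ifP => _ //; exact: sqr_ge0.
have : aV * \sum_(e <- Dstar D) (grad gg e) ^+ 2 <=
   aV * \sum_(x <- D) \sum_(y <- nbrs x) (gg y - gg x) ^+ 2.
  exact: ler_wpM2l.
lra.
Qed.
End M2.

Theorem lemma3p3 (R : realType) (V : R -> R) (HV : admissible_V V) :
  exists C : R, 0 < C /\
  forall (D : seq vtx) (psi psi' : vtx -> R) (a b : vtx -> \bar R)
    (W : vtx -> R -> R) (h1 h2 : R -> vtx -> R) (la1 lb1 la2 lb2 : vtx -> R -> R),
    uniq D ->
    (forall x, x \in D -> (a x <= b x)%E) ->
    is_solution V D psi a b W h1 la1 lb1 ->
    is_solution V D psi' a b W h2 la2 lb2 ->
    let hbar := fun t z => ext D (h1 t) psi z - ext D (h2 t) psi' z in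
    let psibar := fun z => psi z - psi' z in
    forall S T : R, S < T ->
      \sum_(x <- D) (hbar T x) ^+ 2
      + Rintegral lebesgue_measure `[S, T]
          (fun t => \sum_(e <- Dstar D) (grad (hbar t) e) ^+ 2)
      <= C * (\sum_(x <- D) (hbar S x) ^+ 2
              + Rintegral lebesgue_measure `[S, T]
                  (fun t => \sum_(e <- dDstar D) `|psibar e.2| * `|grad (hbar t) e|)).
Proof.
move: HV => [dV [ddV [_ [ev [[aV [AV [a0 bnd]]] _]]]]].
have aA : aV <= AV by case/andP: (bnd 0) => h1 h2; exact: le_trans h1 h2.
have cdV := @der_cont R V ddV.
have oddV := @der_odd R V dV ev.
have mvt := @der_mvt R V aV AV ddV bnd.
have ai : 0 < aV^-1 by rewrite invr_gt0.
exists ((1 + aV^-1) * (1 + 2 * AV)); split.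
  by apply: mulr_gt0; lra.
move=> D psi psi' a b W h1 h2 la1 lb1 la2 lb2 uD ab sol1 sol2 hbar psibar S T ST.
move: sol1 => [c1 [bd1 [ma1 [mb1 [_ [_ [ia1 [ib1 eq1]]]]]]]].
move: sol2 => [c2 [bd2 [ma2 [mb2 [_ [_ [ia2 [ib2 eq2]]]]]]]].
have ST' := ltW ST.
have chb z : continuous (fun t => hbar t z).
  by move=> u; apply: cvgB; apply: cont_ext.
pose F x u := drift V D psi (h1 u) x - drift V D psi' (h2 u) x.
have cF x : continuous (F x).
  by move=> u; apply: cvgB; apply: cont_drift.
have en x : x \in D -> hbar T x ^+ 2 - hbar S x ^+ 2 <=
   Rintegral lebesgue_measure `[S, T] (fun u => 2 * hbar u x * F x u).
  move=> xD.
  have hx u : hbar u x = h1 u x - h2 u x by rewrite /hbar /ext xD.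
  apply: (@energy R (fun u => hbar u x) (F x) (fun t => la1 x t + lb2 x t)
     (fun t => lb1 x t + la2 x t)) => //.
  - by move=> s t st; apply: lerD; [exact: ma1|exact: mb2].
  - by move=> s t st; apply: lerD; [exact: mb1|exact: ma2].
  - move=> s t st; rewrite !hx /F RintegralB //; [|apply: cint; exact: cont_drift|apply: cint; exact: cont_drift].
    have := eq1 x s t xD st; have := eq2 x s t xD st; lra.
  - move=> s t st lt; case: (ltP (la1 x s) (la1 x t)) => h.
      have [u hu nu] := @incr_wit R _ _ s t (ia1 x s t xD st) h.
      exists u => //; rewrite hx subr_le0 -lee_fin.
      rewrite -leNgt in nu; apply: le_trans nu _; exact: (bd2 x u xD).1.
    have e : la1 x s = la1 x t by apply/eqP; rewrite eq_le h ma1.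
    have h' : lb2 x s < lb2 x t by lra.
    have [u hu nu] := @incr_wit R _ _ s t (ib2 x s t xD st) h'.
    exists u => //; rewrite hx subr_le0 -lee_fin.
    rewrite -leNgt in nu; apply: le_trans nu; exact: (bd1 x u xD).2.
  - move=> s t st lt; case: (ltP (lb1 x s) (lb1 x t)) => h.
      have [u hu nu] := @incr_wit R _ _ s t (ib1 x s t xD st) h.
      exists u => //; rewrite hx subr_ge0 -lee_fin.
      rewrite -leNgt in nu; apply: le_trans nu; exact: (bd2 x u xD).2.
    have e : lb1 x s = lb1 x t by apply/eqP; rewrite eq_le h mb1.
    have h' : la2 x s < la2 x t by lra.
    have [u hu nu] := @incr_wit R _ _ s t (ia2 x s t xD st) h'.
    exists u => //; rewrite hx subr_ge0 -lee_fin.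
    rewrite -leNgt in nu; apply: le_trans nu _; exact: (bd1 x u xD).1.
set G := fun t => \sum_(e <- Dstar D) (grad (hbar t) e) ^+ 2.
set B := fun t => \sum_(e <- dDstar D) `|psibar e.2| * `|grad (hbar t) e|.
have cG : continuous G.
  apply: cont_sum => e u.
  apply: (@continuous_comp _ _ _ (fun t => grad (hbar t) e) (fun x : R => x ^+ 2)).
    by rewrite /grad; apply: cvgB; exact: chb.
  exact: exprn_continuous.
have cB : continuous B.
  apply: cont_sum => e u; apply: cvgM.
    exact: cvg_cst.
  apply: (@continuous_comp _ _ _ (fun t => grad (hbar t) e) Num.norm).
    by rewrite /grad; apply: cvgB; exact: chb.
  exact: norm_continuous.
have cf x : continuous (fun u => 2 * hbar u x * F x u).
  by move=> u; apply: cvgM; [apply: cvgM; [exact: cvg_cst|exact: chb]|exact: cF].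
have step1 : \sum_(x <- D) hbar T x ^+ 2 - \sum_(x <- D) hbar S x ^+ 2 <=
   Rintegral lebesgue_measure `[S, T] (fun u => \sum_(x <- D) 2 * hbar u x * F x u).
  rewrite (@Rint_sum R _ D (fun x u => 2 * hbar u x * F x u)) // -sumrB.
  by rewrite big_seq [X in _ <= X]big_seq; apply: ler_sum => x xD; exact: en.
have step2 : Rintegral lebesgue_measure `[S, T] (fun u => \sum_(x <- D) 2 * hbar u x * F x u)
   <= - aV * Rintegral lebesgue_measure `[S, T] G + 2 * AV * Rintegral lebesgue_measure `[S, T] B.
  rewrite -RintegralZl //; last exact: cint.
  rewrite -RintegralZl //; last exact: cint.
  rewrite -RintegralD //; [|apply: cint => u; apply: cvgM; [exact: cvg_cst|exact: cG]
     |apply: cint => u; apply: cvgM; [exact: cvg_cst|exact: cB]].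
  apply: le_Rintegral => //.
  - by apply: cint; apply: cont_sum.
  - apply: cint => u; apply: cvgD; apply: cvgM; (try exact: cvg_cst); [exact: cG|exact: cB].
  move=> u _.
  apply: (@pointwise R V aV AV (ltW a0) mvt oddV D uD (ext D (h1 u) psi) (ext D (h2 u) psi') psibar).
  by move=> z zD; rewrite /ext (negbTE zD).
have G0 : 0 <= Rintegral lebesgue_measure `[S, T] G.
  by apply: Rintegral_ge0 => u _; apply: sumr_ge0 => e _; exact: sqr_ge0.
have B0 : 0 <= Rintegral lebesgue_measure `[S, T] B.
  by apply: Rintegral_ge0 => u _; apply: sumr_ge0 => e _; rewrite mulr_ge0.
have P0 : 0 <= \sum_(x <- D) hbar T x ^+ 2 by apply: sumr_ge0 => x _; exact: sqr_ge0.
have Q0 : 0 <= \sum_(x <- D) hbar S x ^+ 2 by apply: sumr_ge0 => x _; exact: sqr_ge0.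
set IG := Rintegral lebesgue_measure `[S, T] G in step2 G0 *.
set IB := Rintegral lebesgue_measure `[S, T] B in step2 B0 *.
set PT := \sum_(x <- D) hbar T x ^+ 2 in step1 P0 *.
set PS := \sum_(x <- D) hbar S x ^+ 2 in step1 Q0 *.
have main : PT + aV * IG <= PS + 2 * AV * IB by lra.
have e1 : PT + IG <= (1 + aV^-1) * (PT + aV * IG).
  have -> : (1 + aV^-1) * (PT + aV * IG) = PT + aV^-1 * PT + (aV + 1) * IG.
    by field; rewrite gt_eqF.
  have := mulr_ge0 (ltW ai) P0; have := mulr_ge0 (ltW a0) G0; lra.
have e2 : (1 + aV^-1) * (PT + aV * IG) <= (1 + aV^-1) * (PS + 2 * AV * IB).
  by apply: ler_wpM2l => //; lra.
have e3 : PS + 2 * AV * IB <= (1 + 2 * AV) * (PS + IB).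
  have -> : (1 + 2 * AV) * (PS + IB) = PS + 2 * AV * IB + (IB + 2 * AV * PS) by ring.
  have : 0 <= AV * PS by apply: mulr_ge0 => //; lra.
  lra.
have e4 : (1 + aV^-1) * (PS + 2 * AV * IB) <= (1 + aV^-1) * ((1 + 2 * AV) * (PS + IB)).
  by apply: ler_wpM2l => //; lra.
rewrite mulrA in e4; lra.
Qed.
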